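(* Let $\Delta\subseteq\mathbb{R}^d$ be a Delzant polytope. Then $\Upsilon(\Delta)$ equals the facet width of $\Delta$.
   Context: A Delzant polytope is a full-dimensional polytope $\Delta\subseteq\mathbb{R}^d$ whose normal fan consists of unimodular cones, i.e. at each vertex the primitive inner normals of the incident facets form a basis of $(\mathbb{Z}^d)^*$. Write the facets as $\{x\in\Delta:\langle u_k,x\rangle=-\phi_k\}$, $k=1,\dots,m$, with $u_k\in(\mathbb{Z}^d)^*$ primitive inner facet normals and $\phi_k\in\mathbb{R}$. $\Upsilon(\Delta)$ is the minimum of all positive values $\sum_k a_k\phi_k$ where $a_k$ are nonnegative integers with $\sum_k a_ku_k=0$. For $u\ne0$, $\mathrm{width}_u(\Delta)=\max_{x,y\in\Delta}|u(x)-u(y)|$; the facet width of $\Delta$ is $\min_k \mathrm{width}_{u_k}(\Delta)$ over the facet normals $u_k$. *)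

(* Defs.v *)
(* Polytopes in R^d are modelled over an arbitrary real
   (ordered) field R : realFieldType; points are row vectors 'rV[R]_d,
   integral dual vectors (facet normals) are row vectors 'rV[int]_d. *)
From HB Require Import structures.
From mathcomp Require Import all_boot all_order all_algebra.
Set Implicit Arguments. Unset Strict Implicit. Unset Printing Implicit Defensive.
Import Order.TTheory GRing.Theory Num.Theory.
Local Open Scope ring_scope.

Section Delzant.
Variable R : realFieldType.

Definition pair (d : nat) (u : 'rV[int]_d) (x : 'rV[R]_d) : R :=
  \sum_(i < d) (u 0 i)%:~R * x 0 i.

Variables (d m : nat) (u : 'I_m -> 'rV[int]_d) (phi : 'I_m -> R).

Definition in_poly (x : 'rV[R]_d) : Prop := forall k, - phi k <= pair (u k) x.

Definition active (x : 'rV[R]_d) (k : 'I_m) : Prop := pair (u k) x = - phi k.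

Definition is_vertex (v : 'rV[R]_d) : Prop :=
  in_poly v /\
  forall x y, in_poly x -> in_poly y -> x + y = v *+ 2 -> x = y.

Definition primitive (w : 'rV[int]_d) : Prop :=
  forall (n : int) (w' : 'rV[int]_d), w = n *: w' -> n = 1 \/ n = -1.

Definition active_normals_Zbasis (v : 'rV[R]_d) : Prop :=
  (forall c : 'I_m -> int, (forall k, ~ active v k -> c k = 0) ->
     \sum_(k < m) c k *: u k = 0 -> forall k, c k = 0) /\
  (forall w : 'rV[int]_d, exists c : 'I_m -> int,
     (forall k, ~ active v k -> c k = 0) /\ w = \sum_(k < m) c k *: u k).

Definition Delzant : Prop :=
  [/\
      exists M : R, forall x, in_poly x -> forall i, `|x 0 i| <= M,
      exists x : 'rV[R]_d, forall k, - phi k < pair (u k) x,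
      (* each k gives a facet, and distinct k give distinct facets
         (irredundant facet description) *)
      forall k, exists x : 'rV[R]_d,
        active x k /\ forall j, j != k -> - phi j < pair (u j) x,
      forall k, primitive (u k) &
      forall v, is_vertex v -> active_normals_Zbasis v].

Definition is_Upsilon (w : R) : Prop :=
  (exists a : 'I_m -> nat,
      \sum_(k < m) u k *+ a k = 0 /\ w = \sum_(k < m) (a k)%:R * phi k /\ 0 < w) /\
  (forall a : 'I_m -> nat, \sum_(k < m) u k *+ a k = 0 ->
      0 < \sum_(k < m) (a k)%:R * phi k -> w <= \sum_(k < m) (a k)%:R * phi k).

Definition is_width (z : 'rV[int]_d) (w : R) : Prop :=
  (exists x y, in_poly x /\ in_poly y /\ w = `|pair z x - pair z y|) /\
  (forall x y, in_poly x -> in_poly y -> `|pair z x - pair z y| <= w).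

Definition is_facet_width (w : R) : Prop :=
  (exists k, is_width (u k) w) /\
  (forall k w', is_width (u k) w' -> w <= w').

End Delzant.

(* Main.v *)
Require Import Defs.
From HB Require Import structures.
From mathcomp Require Import all_boot all_order all_algebra.
From mathcomp Require Import ring lra zify.
From Stdlib Require Import Classical.
Import Order.TTheory GRing.Theory Num.Theory.
Set Implicit Arguments. Unset Strict Implicit. Unset Printing Implicit Defensive.
Local Open Scope ring_scope.

Section P.
Variable R : realFieldType.

Lemma fin_argmin (T : finType) (P : pred T) (f : T -> R) x0 :
  P x0 -> exists x, P x /\ forall y, P y -> f x <= f y.
Proof.
move=> Px0; case: (Order.TotalTheory.arg_minP f Px0) => x Px H; by exists x.
Qed.

Variable d : nat.
Implicit Types (w : 'rV[int]_d) (x y : 'rV[R]_d).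

Lemma pairDr w x y : pair w (x + y) = pair w x + pair w y.
Proof. rewrite /pair -big_split; apply: eq_bigr => i _; by rewrite mxE mulrDr. Qed.
Lemma pairZr w (t : R) x : pair w (t *: x) = t * pair w x.
Proof. rewrite /pair mulr_sumr; apply: eq_bigr => i _; rewrite mxE; ring. Qed.
Lemma pairNr w x : pair w (- x) = - pair w x.
Proof. by rewrite -scaleN1r pairZr mulN1r. Qed.
Lemma pairBr w x y : pair w (x - y) = pair w x - pair w y.
Proof. by rewrite pairDr pairNr. Qed.
Lemma pair0r w : pair w (0 : 'rV[R]_d) = 0.
Proof. rewrite /pair big1 // => i _; by rewrite mxE mulr0. Qed.
Lemma pair0l x : pair (0 : 'rV[int]_d) x = 0.
Proof. rewrite /pair big1 // => i _; by rewrite mxE mul0r. Qed.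
Lemma pairDl w w' x : pair (w + w') x = pair w x + pair w' x.
Proof. rewrite /pair -big_split; apply: eq_bigr => i _; by rewrite mxE intrD mulrDl. Qed.
Lemma pairZl (n : int) w x : pair (n *: w) x = n%:~R * pair w x.
Proof. rewrite /pair mulr_sumr; apply: eq_bigr => i _; rewrite mxE intrM; ring. Qed.
Lemma pairNl w x : pair (- w) x = - pair w x.
Proof. by rewrite -scaleN1r pairZl mulN1r. Qed.
Lemma pairMnl w (n : nat) x : pair (w *+ n) x = n%:R * pair w x.
Proof. elim: n => [|n IH]; first by rewrite mulr0n pair0l mul0r.
by rewrite mulrS pairDl IH mulrS mulrDl mul1r. Qed.
Lemma pair_suml (I : Type) (r : seq I) (Pr : pred I) (F : I -> 'rV[int]_d) x :
  pair (\sum_(i <- r | Pr i) F i) x = \sum_(i <- r | Pr i) pair (F i) x.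
Proof. exact: (big_morph (fun w => pair w x) (fun a b => pairDl a b x) (pair0l x)). Qed.
Lemma pair_delta (s : 'I_d) x : pair (delta_mx 0 s) x = x 0 s.
Proof.
rewrite /pair (bigD1 s) //= big1 => [|i /negbTE Hi]; first by rewrite !mxE !eqxx /= mul1r addr0.
by rewrite !mxE Hi andbF mul0r.
Qed.
Lemma pair_int w (z : 'I_d -> int) :
  pair w (\row_s (z s)%:~R : 'rV[R]_d) = (\sum_s w 0 s * z s)%:~R.
Proof. rewrite /pair rmorph_sum; apply: eq_bigr => i _; by rewrite mxE rmorphM. Qed.
End P.

Section Main.
Variables (R : realFieldType) (d m : nat) (u : 'I_m -> 'rV[int]_d) (phi : 'I_m -> R).
Hypothesis Hbnd : exists M : R, forall x, in_poly u phi x -> forall i, `|x 0 i| <= M.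
Hypothesis Hdelz : forall v, is_vertex u phi v -> active_normals_Zbasis u phi v.

Local Notation P := (in_poly u phi).
Implicit Types (x y v z : 'rV[R]_d).
Definition act (x : 'rV[R]_d) : {set 'I_m} := [set k | pair (u k) x == - phi k].
Definition good (x : 'rV[R]_d) := P x /\ forall y : 'rV[R]_d,
  (forall i, i \in act x -> pair (u i) y = 0) -> y = 0.

Lemma actE x k : (k \in act x) = (pair (u k) x == - phi k).
Proof. by rewrite inE. Qed.

Lemma good_vertex x : good x -> is_vertex u phi x.
Proof.
case=> Px H; split => // y z Py Pz Hyz.
apply/eqP; rewrite -subr_eq0; apply/eqP; apply: H => i; rewrite actE => /eqP Hi.
have := congr1 (pair (u i)) Hyz; rewrite pairDr mulr2n pairDr Hi => E.
have := Py i; have := Pz i; rewrite pairBr; lra.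
Qed.

Lemma unbounded x y : P x -> y != 0 -> exists l, pair (u l) y < 0.
Proof.
move=> Px Hy; case: Hbnd => M HM; apply: NNPP => Hno.
have Hge l : 0 <= pair (u l) y.
  by rewrite leNgt; apply/negP => h; apply: Hno; exists l.
have [s Hs] : exists s, y 0 s != 0.
  apply: NNPP => H; move/eqP: Hy; apply; apply/rowP => s; rewrite mxE.
  apply/eqP; apply: NNPP => h; apply: H; exists s; exact/negP.
have M0 : `|x 0 s| <= M := HM x Px s.
have ys : 0 < `|y 0 s| by rewrite normr_gt0.
set t := (M + `|x 0 s| + 1) / `|y 0 s|.
have Ht : 0 <= t by apply: divr_ge0; [have := normr_ge0 (x 0 s); lra | exact: ltW].
have Pt : P (x + t *: y).
  move=> k; rewrite pairDr pairZr; have := Px k; have := mulr_ge0 Ht (Hge k); lra.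
have := HM _ Pt s; rewrite !mxE.
have h1 : `|t * y 0 s| = M + `|x 0 s| + 1.
  by rewrite normrM ger0_norm // /t divfK // normr_eq0.
have := lerB_normD (t * y 0 s) (x 0 s); rewrite h1 addrC; lra.
Qed.

Lemma move x y : P x -> (exists l, pair (u l) y < 0) ->
  exists t, 0 <= t /\ P (x + t *: y) /\ exists l, pair (u l) y < 0 /\
     l \in act (x + t *: y) /\ (l \notin act x -> 0 < t).
Proof.
move=> Px [l0 Hl0].
pose f l := (pair (u l) x + phi l) / (- pair (u l) y).
have [l [Hl Hmin]] := @fin_argmin _ _ (fun l => pair (u l) y < 0) f l0 Hl0.
have sl : 0 <= pair (u l) x + phi l by have := Px l; lra.
have ny : 0 < - pair (u l) y by lra.
exists (f l); split; first by apply: divr_ge0 => //; exact: ltW.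
split.
  move=> k; rewrite pairDr pairZr.
  case: (ltrP (pair (u k) y) 0) => Hk.
    have nk : 0 < - pair (u k) y by lra.
    have := Hmin k Hk; rewrite /f [X in _ <= X]/= ler_pdivlMr // => H.
    have := Px k; move: H; set T := _ / _; lra.
  have := mulr_ge0 (divr_ge0 sl (ltW ny)) Hk; have := Px k; rewrite /f; lra.
exists l; split => //; split.
  rewrite actE pairDr pairZr /f; apply/eqP.
  have hb : pair (u l) y != 0 by rewrite ltr0_neq0.
  rewrite invrN mulrN mulNr -mulrA mulVf // mulr1; lra.
move=> Hna; apply: divr_gt0 => //.
have : - phi l < pair (u l) x by rewrite lt_neqAle eq_sym -actE Hna Px.
lra.
Qed.

Lemma improve x : P x -> ~ good x -> exists x', P x' /\ (#|act x| < #|act x'|)%N.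
Proof.
move=> Px Hng.
have [y [Hy0 Hy]] : exists y, (forall i, i \in act x -> pair (u i) y = 0) /\ y != 0.
  apply: NNPP => H; apply: Hng; split => // y Hy; apply: NNPP => Hne; apply: H.
  by exists y; split => //; apply/eqP.
have [t [t0 [Pt [l [Hl1 [Hl2 _]]]]]] := move Px (unbounded Px Hy).
exists (x + t *: y); split => //; apply: proper_card; apply/properP; split.
  apply/subsetP => i Hi; rewrite actE pairDr pairZr (Hy0 _ Hi) mulr0 addr0.
  by rewrite actE in Hi.
exists l => //; apply/negP => Hl; move: Hl1; by rewrite (Hy0 _ Hl) ltxx.
Qed.

Lemma exists_good x : P x -> exists v, good v.
Proof.
move=> Px; move: (leqnn (m - #|act x|)%N); move: {2}(m - #|act x|)%N => n.
elim: n x Px => [|n IH] x Px Hn; case: (classic (good x)) => Hg;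
  try by exists x.
- have [x' [_ H]] := improve Px Hg.
  have H' : (#|act x'| <= m)%N by rewrite -[X in (_ <= X)%N]card_ord max_card.
  lia.
- have [x' [Px' H]] := improve Px Hg; apply: (IH x' Px'); lia.
Qed.

End Main.

Section Main2.
Variables (R : realFieldType) (d m : nat) (u : 'I_m -> 'rV[int]_d) (phi : 'I_m -> R).
Hypothesis Hbnd : exists M : R, forall x, in_poly u phi x -> forall i, `|x 0 i| <= M.
Hypothesis Hdelz : forall v, is_vertex u phi v -> active_normals_Zbasis u phi v.
Local Notation P := (in_poly u phi).
Local Notation act := (act u phi).
Local Notation good := (good u phi).
Implicit Types (x y v z : 'rV[R]_d).

Lemma zbasis v : good v ->
  (forall c : 'I_m -> int, (forall k, k \notin act v -> c k = 0) ->
     \sum_(k < m) c k *: u k = 0 -> forall k, c k = 0) /\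
  (forall w : 'rV[int]_d, exists c : 'I_m -> int,
     (forall k, k \notin act v -> c k = 0) /\ w = \sum_(k < m) c k *: u k).
Proof.
move=> gv; have [H1 H2] := Hdelz (good_vertex gv); split.
  move=> c Hc; apply: H1 => k Hk; apply: Hc; apply/negP; rewrite actE => /eqP; exact: Hk.
move=> w; have [c [Hc E]] := H2 w; exists c; split => // k Hk; apply: Hc => /eqP Hk'.
by rewrite actE Hk' in Hk.
Qed.

Lemma step k0 v : good v -> forall c : 'I_m -> int,
  (forall k, k \notin act v -> c k = 0) -> - u k0 = \sum_k c k *: u k ->
  forall j, c j < 0 -> exists v', good v' /\ pair (u k0) v < pair (u k0) v'.
Proof.
move=> gv c Hcs Hc j Hcj.
have [Hind Hspan] := zbasis gv.
have [C HC] := fin_all_exists (fun s : 'I_d => Hspan (delta_mx 0 s)).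
have HCs s k : k \notin act v -> C s k = 0 by move=> Hk; exact: (HC s).1.
have HCe s : delta_mx 0 s = \sum_k C s k *: u k by exact: (HC s).2.
have dual i j' : i \in act v -> \sum_s u i 0 s * C s j' = (i == j')%:Z.
  move=> Hi.
  pose D k := \sum_s u i 0 s * C s k - (k == i)%:Z.
  suff : D j' = 0 by rewrite /D eq_sym => /eqP; rewrite subr_eq0 => /eqP.
  apply: Hind.
    move=> k Hk; rewrite /D big1 => [|s _]; last by rewrite HCs // mulr0.
    have -> : (k == i) = false by apply/negP => /eqP E; rewrite E Hi in Hk.
    by rewrite subr0.
  rewrite /D.
  under eq_bigr => k _ do rewrite scalerBl.
  rewrite sumrB.
  have E1 : \sum_k (\sum_s u i 0 s * C s k) *: u k = u i.
    rewrite [RHS](row_sum_delta (u i)).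
    under eq_bigr => k _ do rewrite scaler_suml.
    rewrite exchange_big /=; apply: eq_bigr => s _.
    rewrite HCe scaler_sumr; apply: eq_bigr => k _; by rewrite scalerA.
  have E2 : \sum_k (k == i)%:Z *: u k = u i.
    rewrite (bigD1 i) //= eqxx scale1r big1 ?addr0 // => k /negbTE ->.
    by rewrite scale0r.
  by rewrite E1 E2 subrr.
have Hj : j \in act v by apply: contraTT Hcj => /Hcs ->; rewrite ltxx.
set y : 'rV[R]_d := \row_s (C s j)%:~R.
have Hy i : i \in act v -> pair (u i) y = (i == j)%:R.
  by move=> Hi; rewrite pair_int dual //; case: (i == j).
have Hk0 : pair (u k0) y = - (c j)%:~R.
  have := congr1 (fun w => pair w y) Hc; rewrite /= pairNl pair_suml.
  rewrite (bigD1 j) //= big1 => [|k Hk].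
    by rewrite pairZl (Hy j Hj) eqxx mulr1 addr0 => E; rewrite -E opprK.
  rewrite pairZl; case: (boolP (k \in act v)) => Hka.
    by rewrite Hy // (negbTE Hk) mulr0.
  by rewrite Hcs // mul0r.
have y0 : y != 0.
  apply/eqP => E; move: (Hy j Hj); rewrite E pair0r eqxx => /eqP.
  by rewrite eq_sym oner_eq0.
have [Pv _] := gv.
have [t [t0 [Pt [l0 [Hl1 [Hl2 Hl3]]]]]] := move Pv (unbounded Hbnd Pv y0).
have l0na : l0 \notin act v.
  apply/negP => H; move: Hl1; rewrite (Hy _ H); case: (l0 == j) => /=; lra.
have tpos := Hl3 l0na.
have actv' i : i \in act v -> i != j -> i \in act (v + t *: y).
  move=> Hi Hij; rewrite actE pairDr pairZr Hy // (negbTE Hij) mulr0 addr0.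
  by rewrite actE in Hi.
exists (v + t *: y); split.
  split => // z Hz.
  have [b [Hbs Hb]] := Hspan (u l0).
  have sumj (x : 'rV[R]_d) : (forall k, k \in act v -> k != j -> pair (u k) x = 0) ->
      pair (u l0) x = (b j)%:~R * pair (u j) x.
    move=> Hx; rewrite [in LHS]Hb pair_suml (bigD1 j) //= big1 => [|k Hk].
      by rewrite pairZl addr0.
    rewrite pairZl; case: (boolP (k \in act v)) => Hka.
      by rewrite Hx // mulr0.
    by rewrite Hbs // mul0r.
  have e1 : pair (u l0) y = (b j)%:~R.
    rewrite sumj ?Hy ?eqxx ?mulr1 // => k Hk Hkj; by rewrite Hy // (negbTE Hkj).
  have e2 : pair (u l0) z = (b j)%:~R * pair (u j) z.
    by apply: sumj => k Hk Hkj; apply: Hz; apply: actv'.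
  have Hj0 : pair (u j) z = 0.
    move: e2; rewrite (Hz _ Hl2) => /esym/eqP; rewrite mulf_eq0 => /orP[|/eqP //].
    by rewrite -e1 => /eqP E; move: Hl1; rewrite E ltxx.
  apply/rowP => s; rewrite mxE -pair_delta HCe pair_suml big1 // => k _.
  rewrite pairZl; case: (boolP (k \in act v)) => Hk; last by rewrite HCs // mul0r.
  case: (eqVneq k j) => [->|Hkj]; first by rewrite Hj0 mulr0.
  by rewrite Hz ?mulr0 //; apply: actv'.
rewrite pairDr pairZr Hk0.
have : (c j)%:~R < 0 :> R by rewrite ltrz0.
move=> h; have := mulr_gt0 tpos (_ : 0 < - (c j)%:~R :> R); lra.
Qed.

End Main2.

Section Main3.
Variables (R : realFieldType) (d m : nat) (u : 'I_m -> 'rV[int]_d) (phi : 'I_m -> R).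
Hypothesis Hbnd : exists M : R, forall x, in_poly u phi x -> forall i, `|x 0 i| <= M.
Hypothesis Hdelz : forall v, is_vertex u phi v -> active_normals_Zbasis u phi v.
Local Notation P := (in_poly u phi).
Local Notation act := (act u phi).
Local Notation good := (good u phi).
Implicit Types (x y v z w : 'rV[R]_d).

Definition cert k v (a : 'I_m -> nat) := good v /\
  (forall i, i \notin act v -> a i = 0%N) /\ u k + \sum_i u i *+ a i = 0.

Lemma uniq_good v w : good v -> good w -> act w = act v -> w = v.
Proof.
move=> [Pv gv] [Pw _] E; apply/eqP; rewrite -subr_eq0; apply/eqP; apply: gv => i Hi.
have Hw : i \in act w by rewrite E.
rewrite actE in Hi; rewrite actE in Hw.
by rewrite pairBr (eqP Hi) (eqP Hw) subrr.
Qed.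

Lemma exists_cert k0 x0 : P x0 -> exists p : 'rV[R]_d * ('I_m -> nat), cert k0 p.1 p.2.
Proof.
move=> Px0; apply: NNPP => Hno.
have better v : good v -> exists v', good v' /\ pair (u k0) v < pair (u k0) v'.
  move=> gv; have [_ Hspan] := zbasis Hdelz gv; have [c [Hcs Hc]] := Hspan (- u k0).
  case: (classic (exists j, c j < 0)) => [[j Hj]|Hneg].
    exact: (step Hbnd Hdelz gv Hcs Hc Hj).
  exfalso; apply: Hno; exists (v, fun i => `|c i|%N); split => //=; split.
    by move=> i Hi; rewrite Hcs.
  have ha i : u i *+ `|c i|%N = c i *: u i.
    have c0 : 0 <= c i by rewrite leNgt; apply/negP => h; apply: Hneg; exists i.
    by rewrite -scaler_nat natz gez0_abs.
  under eq_bigr do rewrite ha.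
  by rewrite -Hc subrr.
have Q n : exists v, good v /\ exists L : {set {set 'I_m}}, #|L| = n /\
   forall S, S \in L -> exists w, good w /\ act w = S /\ pair (u k0) w <= pair (u k0) v.
  elim: n => [|n [v [gv [L [cL HL]]]]].
    have [v gv] := exists_good Hbnd Px0; exists v; split => //; exists set0; split.
      by rewrite cards0.
    by move=> S; rewrite inE.
  have [v' [gv' lt]] := better v gv.
  exists v'; split => //; exists (act v' |: L); split.
    rewrite cardsU1 cL; have -> // : act v' \notin L.
    apply/negP => H; have [w [gw [aw le]]] := HL _ H.
    have E := uniq_good gv' gw aw; rewrite E in le; by move: lt; rewrite ltNge le.
  move=> S; rewrite in_setU1 => /orP[/eqP ->|HS].
    by exists v'; split => //; split.
  have [w [gw [aw le]]] := HL _ HS; exists w; do 2 split => //; exact: le_trans le (ltW lt).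
have [v [_ [L [cL _]]]] := Q #|{: {set 'I_m}}|.+1.
have : (#|L| <= #|{: {set 'I_m}}|)%N by apply: max_card.
by rewrite cL ltnn.
Qed.

Lemma cert_val k v a : cert k v a -> pair (u k) v = \sum_i (a i)%:R * phi i.
Proof.
move=> [[Pv _] [Ha E]].
have := congr1 (fun w : 'rV[int]_d => pair w v) E; rewrite /= pair0l pairDl pair_suml => E'.
have : \sum_i pair (u i *+ a i) v = - \sum_i (a i)%:R * phi i.
  rewrite -sumrN; apply: eq_bigr => i _; rewrite pairMnl.
  case: (boolP (i \in act v)) => Hi; last by rewrite Ha // !mul0r oppr0.
  by rewrite actE in Hi; rewrite (eqP Hi) mulrN.
move=> E2; rewrite E2 in E'; lra.
Qed.

Lemma cert_opt k v a x : cert k v a -> P x -> pair (u k) x <= pair (u k) v.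
Proof.
move=> c Px; rewrite (cert_val c); case: c => _ [_ E].
have := congr1 (fun w : 'rV[int]_d => pair w x) E; rewrite /= pair0l pairDl pair_suml => E'.
have -> : pair (u k) x = - \sum_i pair (u i *+ a i) x by lra.
rewrite -sumrN; apply: ler_sum => i _; rewrite pairMnl -mulrN.
apply: ler_wpM2l => //; have := Px i; lra.
Qed.

Lemma sum_zero_shift (a : 'I_m -> nat) x : \sum_i u i *+ a i = 0 ->
  \sum_i (a i)%:R * phi i = \sum_i (a i)%:R * (phi i + pair (u i) x).
Proof.
move=> E; under [RHS]eq_bigr do rewrite mulrDr; rewrite big_split /=.
have : pair (\sum_i u i *+ a i) x = 0 by rewrite E pair0l.
rewrite pair_suml => E'.
have -> : \sum_i (a i)%:R * pair (u i) x = 0.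
  rewrite -[RHS]E'; apply: eq_bigr => i _; by rewrite pairMnl.
by rewrite addr0.
Qed.

End Main3.

Unset Implicit Arguments.

Theorem lemma3p8 (R : realFieldType) (d m : nat)
    (u : 'I_m -> 'rV[int]_d) (phi : 'I_m -> R) :
  (0 < d)%N -> Delzant u phi ->
  exists w : R, is_Upsilon u phi w /\ is_facet_width u phi w.
Proof.
move=> d0 [Hbnd [x0 Hx0] Hfacet _ Hdelz].
have Px0 : in_poly u phi x0 by move=> k; exact: ltW.
have [k00 _] : exists k : 'I_m, True.
  apply: NNPP => H; case: Hbnd => M HM.
  have Pc : in_poly u phi (const_mx (`|M| + 1) : 'rV[R]_d).
    by move=> k; exfalso; apply: H; exists k.
  have := HM _ Pc (Ordinal d0); rewrite mxE ger0_norm; last first.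
    by have := normr_ge0 M; lra.
  have := ler_norm M; lra.
have [F HF] := fin_all_exists (fun k => exists_cert Hbnd Hdelz k Px0).
have [Fp HFp] := fin_all_exists Hfacet.
have Hact k : pair (u k) (Fp k) = - phi k by exact: (HFp k).1.
have PFp k : in_poly u phi (Fp k).
  move=> j; case: (eqVneq j k) => [->|Hjk]; first by rewrite Hact.
  exact: ltW ((HFp k).2 j Hjk).
have PV k : in_poly u phi (F k).1 by case: (HF k) => [[]].
have opt k x : in_poly u phi x -> pair (u k) x <= pair (u k) (F k).1.
  exact: cert_opt (HF k).
pose W k := pair (u k) (F k).1 + phi k.
have Wpos k : 0 < W k by have := opt k x0 Px0; have := Hx0 k; rewrite /W; lra.
have [k0 [_ Hk0]] := @fin_argmin R _ xpredT W k00 isT.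
have WW k : `|pair (u k) (F k).1 - pair (u k) (Fp k)| = W k.
  by rewrite Hact opprK ger0_norm //; exact: ltW (Wpos k).
have widthW k : is_width u phi (u k) (W k).
  split; first by exists (F k).1, (Fp k); do 2 split => //; rewrite WW.
  move=> x y Px Py; rewrite ler_norml; have := opt k x Px; have := opt k y Py.
  have := Px k; have := Py k; rewrite /W; lra.
exists (W k0); split; last first.
  split; first by exists k0.
  move=> k w' [_ Hb]; apply: le_trans (Hk0 k isT) _.
  by rewrite -WW; apply: Hb.
split.
  pose a i := (((F k0).2 i) + (i == k0))%N.
  exists a; have [_ [_ E]] := HF k0.
  have E2 : \sum_i u i *+ (i == k0) = u k0.
    rewrite (bigD1 k0) //= eqxx mulr1n big1 ?addr0 // => i /negbTE ->.
    by rewrite mulr0n.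
  have E3 : \sum_i (i == k0)%:R * phi i = phi k0.
    rewrite (bigD1 k0) //= eqxx mul1r big1 ?addr0 // => i /negbTE ->.
    by rewrite mul0r.
  split.
    rewrite /a; under eq_bigr do rewrite mulrnDr.
    by rewrite big_split /= E2 addrC.
  split; last exact: Wpos.
  rewrite /W (cert_val (HF k0)); under [RHS]eq_bigr do rewrite /a natrD mulrDl.
  by rewrite big_split /= E3.
move=> b Sb Hpos.
have [k1 Hk1] : exists k1, b k1 != 0%N.
  apply: NNPP => H; move: Hpos; rewrite big1 ?ltxx // => i _.
  have -> : b i = 0%N by apply/eqP; apply: NNPP => h; apply: H; exists i; apply/negP.
  by rewrite mul0r.
rewrite (@sum_zero_shift _ _ _ u phi b (F k1).1 Sb).
apply: le_trans (Hk0 k1 isT) _.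
rewrite (bigD1 k1) //=.
have h1 : 0 <= \sum_(i | i != k1) (b i)%:R * (phi i + pair (u i) (F k1).1).
  apply: sumr_ge0 => i _; apply: mulr_ge0 => //; have := PV k1 i; lra.
have h2 : 1 <= (b k1)%:R :> R by rewrite ler1n lt0n.
have := Wpos k1; move: h1 h2; rewrite /W.
set s := \sum_(i | _) _; set n := (b k1)%:R; set p := pair _ _.
nra.
Qed.
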